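(* Consider the heterogeneous database model described in the context, with $P(R\in\mathcal D)>0$, and let $0<\alpha_1,\alpha_2\le1$. (a) Let $t_{j,\alpha_j}$ be the largest $t\ge0$ with $P(LR_j(S_j)\ge t)\ge\alpha_j$ ($j=1,2$), and $\mathcal D_{\alpha_1,\alpha_2}=\{i\in\mathcal D_1: LR_1(P_i)\ge t_{1,\alpha_1}\}\cup\{i\in\mathcal D_2: LR_2(P_i)\ge t_{2,\alpha_2}\}$. Then \[ P(R\in\mathcal D_{\alpha_1,\alpha_2}\mid R\in\mathcal D)\ge\alpha_1P(R\in\mathcal D_1\mid R\in\mathcal D)+\alpha_2P(R\in\mathcal D_2\mid R\in\mathcal D). \] (b) Let $\mathcal D^{\alpha_1,\alpha_2}=\mathcal D_1^{\alpha_1}\cup\mathcal D_2^{\alpha_2}$, where for $j=1,2$ with $P(R\in\mathcal D_j)>0$, $\mathcal D_j^{\alpha_j}$ is obtained by applying the following construction to the indices in $\mathcal D_j$ alone: order the indices $i\in\mathcal D_j$ by decreasing $r_i\pi_i$ (with $r_i=LR_j(P_i)$ and a fixed tie-breaking rule), and take the smallest initial segment whose sum of $r_i\pi_i$ is at least $\alpha_j\sum_{i\in\mathcal D_j}r_i\pi_i$ (if $P(R\in\mathcal D_j)=0$ the corresponding term below is $0$). Then the same lower bound holds: \[ P(R\in\mathcal D^{\alpha_1,\alpha_2}\mid R\in\mathcal D)\ge\alpha_1P(R\in\mathcal D_1\mid R\in\mathcal D)+\alpha_2P(R\in\mathcal D_2\mid R\in\mathcal D). \]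
   Context: Let $E_1,E_2$ be countable sets and for $j=1,2$ let $S_j,G_j$ be $E_j$-valued random variables with $P(S_j=e)>0\Rightarrow P(G_j=e)>0$ for all $e\in E_j$; define $LR_j(e)=P(S_j=e)/P(G_j=e)$ if $P(G_j=e)>0$ and $0$ otherwise. Fix $N\ge1$ and a partition $\{1,\dots,N\}=\mathcal D_1\sqcup\mathcal D_2$; write $\mathcal D=\{1,\dots,N\}$. Let $R$ be a random variable with values in $\{0,1,\dots,N\}$ ($R=0$ meaning $R\notin\mathcal D$), with $\pi_i=P(R=i)$. There are random variables $P_1,\dots,P_N$, with $P_i$ taking values in $E_j$ when $i\in\mathcal D_j$, such that conditionally on $R=k$ ($0\le k\le N$) the $P_i$ are independent, $P_i$ has the distribution of $S_j$ if $i=k\in\mathcal D_j$ and of $G_j$ if $i\ne k$, $i\in\mathcal D_j$. *)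

(* Defs.v *)
From Stdlib Require Import Reals List Arith ClassicalEpsilon.
Open Scope R_scope.

Definition is_pmf (p : nat -> R) : Prop :=
  (forall n, 0 <= p n) /\ infinite_sum p 1.

Definition ind (p : nat -> R) (A : nat -> Prop) (n : nat) : R :=
  if excluded_middle_informative (A n) then p n else 0.

Definition Pr (p : nat -> R) (A : nat -> Prop) : R :=
  epsilon (inhabits 0) (fun l => infinite_sum (ind p A) l).

Definition CPr (p : nat -> R) (A B : nat -> Prop) : R :=
  Pr p (fun w => A w /\ B w) / Pr p B.

Definition LR {E : Type} (p : nat -> R) (S G : nat -> E) (e : E) : R :=
  if Rlt_dec 0 (Pr p (fun w => G w = e))
  then Pr p (fun w => S w = e) / Pr p (fun w => G w = e)
  else 0.

Definition sumR (l : list nat) (f : nat -> R) : R :=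
  fold_right (fun i a => f i + a) 0 l.
Definition prodR (l : list nat) (f : nat -> R) : R :=
  fold_right (fun i a => f i * a) 1 l.

Definition idx (N : nat) : list nat := seq 1 N.
Definition idxD (N : nat) (Dj : nat -> bool) : list nat := filter Dj (idx N).

Definition before (w : nat -> R) (prio : nat -> nat) (i j : nat) : bool :=
  if Rlt_dec (w j) (w i) then true
  else if Rlt_dec (w i) (w j) then false
  else Nat.ltb (prio i) (prio j).

Fixpoint insertR (bf : nat -> nat -> bool) (x : nat) (l : list nat) : list nat :=
  match l with
  | nil => x :: nil
  | y :: l' => if bf x y then x :: y :: l' else y :: insertR bf x l'
  end.

Fixpoint isort (bf : nat -> nat -> bool) (l : list nat) : list nat :=
  match l with
  | nil => nil
  | x :: l' => insertR bf x (isort bf l')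
  end.

Fixpoint take_until (w : nat -> R) (acc thr : R) (l : list nat) : list nat :=
  match l with
  | nil => nil
  | x :: l' => if Rle_dec thr acc then nil else x :: take_until w (acc + w x) thr l'
  end.

Definition top_segment (w : nat -> R) (prio : nat -> nat) (alpha : R)
    (L : list nat) : list nat :=
  take_until w 0 (alpha * sumR L w) (isort (before w prio) L).

Definition is_largest_threshold {E : Type} (p : nat -> R) (S G : nat -> E)
    (alpha t : R) : Prop :=
  0 <= t /\ alpha <= Pr p (fun w => t <= LR p S G (S w)) /\
  (forall t', 0 <= t' -> alpha <= Pr p (fun w => t' <= LR p S G (S w)) -> t' <= t).

(* Main.v *)
Require Import Defs.
From Stdlib Require Import Reals List Arith Lra Lia ClassicalEpsilon Classical
  FunctionalExtensionality PropExtensionality Permutation Cantor.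
Open Scope R_scope.

Lemma Pred_ext (A B : nat -> Prop) : (forall n, A n <-> B n) -> A = B.
Proof. intro H; apply functional_extensionality; intro; apply propositional_extensionality; auto. Qed.

Lemma Uncv_ext u v l : (forall n, u n = v n) -> Un_cv u l -> Un_cv v l.
Proof. intros H H1 eps He; destruct (H1 eps He) as [N HN]; exists N; intros n Hn; rewrite <- H; auto. Qed.

Lemma sum0 N : sum_f_R0 (fun _ => 0) N = 0.
Proof. induction N; simpl; [lra| rewrite IHN; lra]. Qed.

Lemma isum0 : infinite_sum (fun _ => 0) 0.
Proof. intros eps He; exists 0%nat; intros; rewrite sum0; unfold Rdist; rewrite Rminus_0_r, Rabs_R0; lra. Qed.

Lemma isum_ext f g l : (forall n, f n = g n) -> infinite_sum f l -> infinite_sum g l.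
Proof. intros H H1. apply (Uncv_ext (sum_f_R0 f)); auto. intro n; apply sum_eq; auto. Qed.

Lemma isum_plus f g a b : infinite_sum f a -> infinite_sum g b ->
  infinite_sum (fun n => f n + g n) (a + b).
Proof. intros H1 H2. apply (Uncv_ext (fun n => sum_f_R0 f n + sum_f_R0 g n)).
  intro; rewrite plus_sum; auto. apply CV_plus; auto. Qed.

Lemma sum_scal c f N : sum_f_R0 (fun n => c * f n) N = c * sum_f_R0 f N.
Proof. induction N; simpl; [lra| rewrite IHN; lra]. Qed.

Lemma isum_scal c f l : infinite_sum f l -> infinite_sum (fun n => c * f n) (c * l).
Proof. intros H. apply (Uncv_ext (fun n => c * sum_f_R0 f n)). intro; rewrite sum_scal; auto.
  intros eps He. destruct (Req_dec c 0) as [->|Hc].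
  - exists 0%nat; intros; unfold Rdist; rewrite !Rmult_0_l, Rminus_0_r, Rabs_R0; lra.
  - assert (Hc' : 0 < Rabs c) by (apply Rabs_pos_lt; auto).
    destruct (H (eps / Rabs c)) as [N HN]. apply Rdiv_lt_0_compat; lra.
    exists N; intros n Hn. specialize (HN n Hn). unfold Rdist in *.
    rewrite <- Rmult_minus_distr_l, Rabs_mult.
    apply (Rmult_lt_compat_l (Rabs c)) in HN; auto.
    replace (Rabs c * (eps / Rabs c)) with eps in HN by (field; lra). lra. Qed.

Lemma isum_le f g a b : (forall n, f n <= g n) -> infinite_sum f a -> infinite_sum g b -> a <= b.
Proof. intros H H1 H2. apply (@Rle_cv_lim (sum_f_R0 f) (sum_f_R0 g)); auto.
  intro; apply sum_Rle; auto. Qed.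

Section P.
Variable p : nat -> R.
Hypothesis Hp : is_pmf p.

Lemma ind_bnd A n : 0 <= Defs.ind p A n <= p n.
Proof. destruct Hp as [H0 _]. unfold Defs.ind; destruct excluded_middle_informative; specialize (H0 n); lra. Qed.

Lemma Pr_spec A : infinite_sum (Defs.ind p A) (Pr p A).
Proof. unfold Pr. apply epsilon_spec. destruct Hp as [H0 H1].
  destruct (Rseries_CV_comp (Defs.ind p A) p (ind_bnd A)) as [l Hl]. exists 1; exact H1.
  exists l; exact Hl. Qed.

Lemma Pr_ge0 A : 0 <= Pr p A.
Proof. apply (isum_le (fun _ => 0) (Defs.ind p A)); [apply ind_bnd| apply isum0| apply Pr_spec]. Qed.

Lemma Pr_mono (A B : nat -> Prop) : (forall n, A n -> B n) -> Pr p A <= Pr p B.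
Proof. intro H. apply (isum_le (Defs.ind p A) (Defs.ind p B)); try apply Pr_spec.
  intro n; unfold Defs.ind; destruct (excluded_middle_informative (A n)), (excluded_middle_informative (B n));
  destruct Hp as [H0 _]; specialize (H0 n); firstorder lra. Qed.

Lemma Pr_empty (A : nat -> Prop) : (forall n, ~ A n) -> Pr p A = 0.
Proof. intro H. apply (uniqueness_sum (Defs.ind p A)). apply Pr_spec.
  apply (isum_ext (fun _ => 0)); [|apply isum0]. intro n; unfold Defs.ind; destruct excluded_middle_informative; firstorder. Qed.

Lemma Pr_True : Pr p (fun _ => True) = 1.
Proof. apply (uniqueness_sum (Defs.ind p (fun _ => True))). apply Pr_spec.
  apply (isum_ext p); [|apply Hp]. intro n; unfold Defs.ind; destruct excluded_middle_informative; firstorder. Qed.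

Lemma Pr_add (A B : nat -> Prop) : (forall n, A n -> B n -> False) ->
  Pr p (fun w => A w \/ B w) = Pr p A + Pr p B.
Proof. intro H. apply (uniqueness_sum (Defs.ind p (fun w => A w \/ B w))). apply Pr_spec.
  apply (isum_ext (fun n => Defs.ind p A n + Defs.ind p B n)); [|apply isum_plus; apply Pr_spec].
  intro n; unfold Defs.ind; destruct (excluded_middle_informative (A n)), (excluded_middle_informative (B n)),
   (excluded_middle_informative (A n \/ B n)); firstorder; lra. Qed.

Lemma Pr_split (A B : nat -> Prop) : Pr p A = Pr p (fun w => A w /\ B w) + Pr p (fun w => A w /\ ~ B w).
Proof. rewrite <- Pr_add. f_equal. apply Pred_ext; intro n; tauto. tauto. Qed.

Lemma Pr_le_n n0 : Pr p (fun w => (w <= n0)%nat) = sum_f_R0 p n0.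
Proof. apply (uniqueness_sum (Defs.ind p (fun w => (w <= n0)%nat))). apply Pr_spec.
  assert (Hk : forall k, sum_f_R0 (Defs.ind p (fun w => (w <= n0)%nat)) (n0 + k) = sum_f_R0 p n0).
  { induction k. rewrite Nat.add_0_r. apply sum_eq. intros; unfold Defs.ind; destruct excluded_middle_informative; auto; lia.
    rewrite Nat.add_succ_r; simpl; rewrite IHk. unfold Defs.ind; destruct excluded_middle_informative; [lia|lra]. }
  intros eps He; exists n0; intros n Hn. replace n with (n0 + (n - n0))%nat by lia. rewrite Hk.
  unfold Rdist; rewrite Rminus_diag, Rabs_R0; lra. Qed.

Fixpoint mx (Y : nat -> nat) n := match n with O => Y O | S n' => Nat.max (Y n) (mx Y n') end.
Lemma mx_le Y n0 n : (n <= n0)%nat -> (Y n <= mx Y n0)%nat.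
Proof. induction n0; intros H; simpl. replace n with 0%nat by lia; lia.
  destruct (Nat.eq_dec n (S n0)) as [->|]; [lia|]. specialize (IHn0 ltac:(lia)); lia. Qed.

Lemma Pr_disint (Y : nat -> nat) (A : nat -> Prop) :
  infinite_sum (fun m => Pr p (fun w => A w /\ Y w = m)) (Pr p A).
Proof.
  assert (HM : forall M, sum_f_R0 (fun m => Pr p (fun w => A w /\ Y w = m)) M = Pr p (fun w => A w /\ (Y w <= M)%nat)).
  { induction M; simpl. f_equal; apply Pred_ext; intro; split; intros [? ?]; split; auto; lia.
    rewrite IHM, <- Pr_add. f_equal; apply Pred_ext; intro; split. intros [[? ?]|[? ?]]; split; auto; lia.
    intros [? ?]; destruct (Nat.eq_dec (Y n) (S M)); [right|left]; split; auto; lia.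
    intros n [? ?] [? ?]; lia. }
  intros eps He. destruct Hp as [_ H1]. destruct (H1 eps He) as [n0 Hn0].
  exists (mx Y n0); intros M HMge. rewrite HM.
  rewrite (Pr_split A (fun w => (Y w <= M)%nat)).
  assert (Hb : Pr p (fun w => A w /\ ~ (Y w <= M)%nat) <= Pr p (fun w => ~ (w <= n0)%nat)).
  { apply Pr_mono. intros n [_ Hn] Hn'. apply Hn. pose proof (mx_le Y n0 n Hn'); lia. }
  assert (Ht : Pr p (fun w => ~ (w <= n0)%nat) = 1 - sum_f_R0 p n0).
  { rewrite <- Pr_True, (Pr_split (fun _ => True) (fun w => (w <= n0)%nat)), <- Pr_le_n.
    replace (fun w : nat => True /\ (w <= n0)%nat) with (fun w => (w <= n0)%nat) by (apply Pred_ext; tauto).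
    replace (fun w : nat => True /\ ~ (w <= n0)%nat) with (fun w => ~(w <= n0)%nat) by (apply Pred_ext; tauto). ring. }
  specialize (Hn0 n0 (le_n _)). unfold Rdist in *.
  pose proof (Pr_ge0 (fun w => A w /\ ~ (Y w <= M)%nat)).
  apply Rabs_def2 in Hn0. apply Rabs_def1; lra. Qed.


Fixpoint lcode (l : list nat) : nat :=
  match l with nil => 0%nat | a :: l' => S (Cantor.to_nat (a, lcode l')) end.
Lemma lcode_inj l1 : forall l2, lcode l1 = lcode l2 -> l1 = l2.
Proof. induction l1 as [|a l1 IH]; intros [|b l2]; cbn [lcode]; intro H; try discriminate; auto.
  assert (H' : Cantor.of_nat (Cantor.to_nat (a, lcode l1)) = Cantor.of_nat (Cantor.to_nat (b, lcode l2))) by congruence.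
  rewrite !Cantor.cancel_of_to in H'. injection H'; intros; subst. f_equal; auto. Qed.

Lemma map_eq_pt {A B} (g h : A -> B) L : map g L = map h L -> forall k, In k L -> g k = h k.
Proof. induction L; simpl; intros H k Hk; [tauto|]. injection H; intros; destruct Hk; subst; auto. Qed.

Lemma prodR_ext L f g : (forall k, In k L -> f k = g k) -> prodR L f = prodR L g.
Proof. induction L; simpl; intros; auto. rewrite H, IHL; auto. Qed.
Lemma sumR_ext L f g : (forall k, In k L -> f k = g k) -> sumR L f = sumR L g.
Proof. induction L; simpl; intros; auto. rewrite H, IHL; auto. Qed.
Lemma prodR_mul L f g : prodR L (fun k => f k * g k) = prodR L f * prodR L g.
Proof. induction L; simpl; [ring| rewrite IHL; ring]. Qed.
Lemma prodR_one L : prodR L (fun _ => 1) = 1.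
Proof. induction L; simpl; [ring|rewrite IHL; ring]. Qed.
Lemma prodR_ind L i c : NoDup L -> In i L -> prodR L (fun k => if Nat.eqb k i then c else 1) = c.
Proof. induction L; simpl; intros Hn Hi; [tauto|]. inversion Hn; subst.
  destruct Hi as [->|Hi]. rewrite Nat.eqb_refl.
  rewrite (prodR_ext _ _ (fun _ => 1)). rewrite prodR_one; ring.
  intros k Hk. destruct (Nat.eqb_spec k i); subst; tauto.
  destruct (Nat.eqb_spec a i); subst; [tauto|]. rewrite IHL; auto; ring. Qed.
Lemma prodR_pick L i c b : NoDup L -> In i L ->
  prodR L (fun k => if Nat.eqb k i then c else b k) = c * prodR L (fun k => if Nat.eqb k i then 1 else b k).
Proof. intros. rewrite (prodR_ext _ _ (fun k => (if Nat.eqb k i then c else 1) * (if Nat.eqb k i then 1 else b k))).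
  rewrite prodR_mul, prodR_ind; auto. intros k _; destruct (Nat.eqb k i); ring. Qed.
Lemma prodR_ge0 L f : (forall k, In k L -> 0 <= f k) -> 0 <= prodR L f.
Proof. induction L; simpl; intros; [lra|]. apply Rmult_le_pos; auto. Qed.
Lemma sumR_ge0 L f : (forall k, In k L -> 0 <= f k) -> 0 <= sumR L f.
Proof. induction L; simpl; intros; [lra|]. apply Rplus_le_le_0_compat; auto. Qed.
Lemma sumR_le L f g : (forall k, In k L -> f k <= g k) -> sumR L f <= sumR L g.
Proof. induction L; simpl; intros; [lra|]. apply Rplus_le_compat; auto. Qed.
Lemma sumR_scal L f c : sumR L (fun k => f k * c) = sumR L f * c.
Proof. induction L; simpl; [ring| rewrite IHL; ring]. Qed.
Lemma sumR_app L1 L2 f : sumR (L1 ++ L2) f = sumR L1 f + sumR L2 f.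
Proof. induction L1; simpl; [ring| rewrite IHL1; ring]. Qed.
Lemma sumR_perm L L' f : Permutation L L' -> sumR L f = sumR L' f.
Proof. induction 1; simpl; auto; try ring; try lra. Qed.

Lemma insertR_perm bf x l : Permutation (insertR bf x l) (x :: l).
Proof. induction l; simpl; auto. destruct (bf x a); auto.
  eapply perm_trans; [apply perm_skip, IHl| apply perm_swap]. Qed.
Lemma isort_perm bf l : Permutation (isort bf l) l.
Proof. induction l; simpl; auto. eapply perm_trans; [apply insertR_perm| auto]. Qed.
Lemma insertR_ext bf bf' x l : (forall y, In y l -> bf x y = bf' x y) -> insertR bf x l = insertR bf' x l.
Proof. induction l; simpl; intros H; auto. rewrite H by auto. destruct (bf' x a); auto. rewrite IHl; auto. Qed.
Lemma isort_ext bf bf' l : (forall x y, In x l -> In y l -> bf x y = bf' x y) -> isort bf l = isort bf' l.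
Proof. induction l; simpl; intros H; auto. rewrite IHl by (intros; apply H; auto).
  apply insertR_ext. intros y Hy. apply H; auto. right. apply (Permutation_in _ (isort_perm bf' l)); auto. Qed.
Lemma take_until_ext w w' acc thr l : (forall x, In x l -> w x = w' x) ->
  take_until w acc thr l = take_until w' acc thr l.
Proof. revert acc; induction l; simpl; intros acc H; auto. destruct Rle_dec; auto.
  rewrite H by auto. rewrite IHl; auto. Qed.
Lemma take_until_prefix w acc thr l : exists r, l = take_until w acc thr l ++ r.
Proof. revert acc; induction l; simpl; intros acc. exists nil; auto. destruct Rle_dec. exists (a :: l); auto.
  destruct (IHl (acc + w a)) as [r Hr]. exists r; simpl; rewrite <- Hr; auto. Qed.
Lemma take_until_bound w thr l : forall acc, thr <= acc + sumR l w -> thr <= acc + sumR (take_until w acc thr l) w.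
Proof. induction l; simpl; intros acc H. auto. destruct Rle_dec. simpl; lra. simpl.
  specialize (IHl (acc + w a) ltac:(lra)). lra. Qed.

Lemma top_segment_ext w w' prio a L : (forall k, In k L -> w k = w' k) ->
  top_segment w prio a L = top_segment w' prio a L.
Proof. intro H. unfold top_segment. rewrite (sumR_ext L w w' H).
  rewrite (isort_ext (before w prio) (before w' prio)).
  apply take_until_ext. intros x Hx. apply H. apply (Permutation_in _ (isort_perm (before w' prio) L)); auto.
  intros x y Hx Hy; unfold before; rewrite !H; auto. Qed.

Lemma top_bound w prio a L : (forall k, In k L -> 0 <= w k) -> 0 <= a <= 1 -> NoDup L ->
  a * sumR L w <= sumR L (fun k => if in_dec Nat.eq_dec k (top_segment w prio a L) then w k else 0).
Proof. intros Hw Ha Hn. unfold top_segment.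
  pose proof (isort_perm (before w prio) L) as Hperm.
  destruct (take_until_prefix w 0 (a * sumR L w) (isort (before w prio) L)) as [r Hr].
  pose proof (take_until_bound w (a * sumR L w) (isort (before w prio) L) 0) as Hb.
  revert Hr Hb Hperm.
  generalize (take_until w 0 (a * sumR L w) (isort (before w prio) L)) as s.
  generalize (isort (before w prio) L) as l. intros l s Hr Hb Hperm.
  assert (Hnd : NoDup l) by (apply (Permutation_NoDup (Permutation_sym Hperm)); auto).
  assert (HS : 0 <= sumR L w) by (apply sumR_ge0; auto).
  rewrite (sumR_perm _ _ w Hperm) in Hb.
  specialize (Hb ltac:(nra)).
  rewrite <- (sumR_perm l L (fun k => if in_dec Nat.eq_dec k s then w k else 0) Hperm). rewrite Hr. rewrite sumR_app.
  rewrite (sumR_ext s _ w) by (intros k Hk; destruct in_dec; tauto).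
  rewrite (sumR_ext r _ (fun _ => 0)).
  2:{ intros k Hk; destruct in_dec; auto. rewrite Hr in Hnd. exfalso.
      destruct (in_split _ _ Hk) as [r1 [r2 ->]]. rewrite app_assoc in Hnd.
      apply NoDup_remove_2 in Hnd. apply Hnd. apply in_or_app; left; apply in_or_app; left; auto. }
  assert (sumR r (fun _ => 0) = 0) by (clear; induction r; simpl; auto; rewrite IHr; ring). lra.
Qed.

Lemma Pr_fin (X : nat -> nat) (B : nat -> Prop) L : NoDup L ->
  Pr p (fun w => In (X w) L /\ B w) = sumR L (fun k => Pr p (fun w => X w = k /\ B w)).
Proof. induction L as [|a L IH]; intros Hn; simpl.
  apply Pr_empty; intros n [[] _].
  inversion Hn; subst. rewrite <- IH by auto. rewrite <- Pr_add.
  f_equal; apply Pred_ext; intro n; split. intros [[H|H] Hb]; [left|right]; auto.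
  intros [[H Hb]|[H Hb]]; split; auto.
  intros n [Hx1 _] [Hx2 _]. subst; auto. Qed.

Lemma LR_ge0 {E} (S G : nat -> E) e : 0 <= LR p S G e.
Proof. unfold LR; destruct Rlt_dec; [|lra]. unfold Rdiv; apply Rmult_le_pos; [apply Pr_ge0| left; apply Rinv_0_lt_compat; auto]. Qed.

Lemma S_LR {E} (S G : nat -> E) e :
  (0 < Pr p (fun w => S w = e) -> 0 < Pr p (fun w => G w = e)) ->
  Pr p (fun w => S w = e) = LR p S G e * Pr p (fun w => G w = e).
Proof. intro H. unfold LR; destruct Rlt_dec. field; lra.
  pose proof (Pr_ge0 (fun w => G w = e)) as HG0. pose proof (Pr_ge0 (fun w => S w = e)) as HS0.
  destruct (Rle_lt_or_eq_dec _ _ HS0) as [r|e0]; [specialize (H r); lra| rewrite <- e0; ring]. Qed.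

Section Gen.
Variables (Ea Eb : Type) (fa : Ea -> nat) (fb : Eb -> nat).
Hypothesis fa_inj : forall x y, fa x = fa y -> x = y.
Hypothesis fb_inj : forall x y, fb x = fb y -> x = y.
Variables (Sa Ga : nat -> Ea) (Sb Gb : nat -> Eb) (La Lb : list nat) (Rv : nat -> nat)
  (Pa : nat -> nat -> Ea) (Pb : nat -> nat -> Eb).
Hypothesis HLa : NoDup La.
Hypothesis Hj : forall k, In k La -> forall (ea : nat -> Ea) (eb : nat -> Eb),
  Pr p (fun w => Rv w = k /\ (forall i, In i La -> Pa i w = ea i) /\ (forall i, In i Lb -> Pb i w = eb i))
  = Pr p (fun w => Rv w = k)
    * prodR La (fun i => if Nat.eqb i k then Pr p (fun w => Sa w = ea i) else Pr p (fun w => Ga w = ea i))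
    * prodR Lb (fun i => if Nat.eqb i k then Pr p (fun w => Sb w = eb i) else Pr p (fun w => Gb w = eb i)).

Definition code (k w : nat) : nat :=
  Cantor.to_nat (lcode (map (fun j => if Nat.eqb j k then 0%nat else fa (Pa j w)) La),
                 lcode (map (fun j => fb (Pb j w)) Lb)).

Lemma code_iff k w w0 : code k w = code k w0 <->
  (forall j, In j La -> j <> k -> Pa j w = Pa j w0) /\ (forall j, In j Lb -> Pb j w = Pb j w0).
Proof. unfold code; split.
  - intro H. apply (f_equal Cantor.of_nat) in H. rewrite !Cantor.cancel_of_to in H.
    injection H; intros H2 H1. apply lcode_inj in H1, H2. split.
    + intros j Hj' Hk. pose proof (map_eq_pt _ _ _ H1 j Hj'). simpl in H0.
      destruct (Nat.eqb_spec j k); [tauto|]. auto.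
    + intros j Hj'. pose proof (map_eq_pt _ _ _ H2 j Hj'). auto.
  - intros [H1 H2]. f_equal. f_equal. f_equal. apply map_ext_in. intros j Hj'.
    destruct (Nat.eqb_spec j k); auto. rewrite H1; auto.
    f_equal. apply map_ext_in. intros j Hj'. rewrite H2; auto. Qed.

Lemma a_m (k : nat) (Hk : In k La) (m : nat) : exists C, forall T : Ea -> Prop,
  Pr p (fun w => (Rv w = k /\ T (Pa k w)) /\ code k w = m) = Pr p (fun w => T (Sa w)) * C.
Proof.
  destruct (classic (exists w0, code k w0 = m)) as [[w0 Hw0]|Hno].
  2:{ exists 0; intro T. rewrite Rmult_0_r. apply Pr_empty. intros n [_ Hn]; eauto. }
  exists (Pr p (fun w => Rv w = k)
     * prodR La (fun i => if Nat.eqb i k then 1 else Pr p (fun w => Ga w = Pa i w0))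
     * prodR Lb (fun i => if Nat.eqb i k then Pr p (fun w => Sb w = Pb i w0) else Pr p (fun w => Gb w = Pb i w0))).
  intro T. match goal with |- _ = _ * ?c => set (C := c) end.
  apply (uniqueness_sum (fun n => Pr p (fun w => ((Rv w = k /\ T (Pa k w)) /\ code k w = m) /\ fa (Pa k w) = n))).
  apply Pr_disint.
  rewrite Rmult_comm.
  apply (isum_ext (fun n => C * Pr p (fun w => T (Sa w) /\ fa (Sa w) = n))).
  2:{ apply isum_scal. apply Pr_disint. }
  intro n.
  destruct (classic (exists e, fa e = n)) as [[e He]|Hne].
  2:{ rewrite !Pr_empty. ring. intros w [_ H]; eauto. intros w [_ H]; eauto. }
  destruct (classic (T e)) as [HT|HT].
  2:{ rewrite !Pr_empty. ring.
      intros w [[[_ H1] _] H2]. rewrite <- He in H2; apply fa_inj in H2. subst; tauto.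
      intros w [H1 H2]. rewrite <- He in H2; apply fa_inj in H2. subst; tauto. }
  set (ea := fun i => if Nat.eqb i k then e else Pa i w0).
  set (eb := fun i => Pb i w0).
  assert (E1 : (fun w => ((Rv w = k /\ T (Pa k w)) /\ code k w = m) /\ fa (Pa k w) = n) =
    (fun w => Rv w = k /\ (forall i, In i La -> Pa i w = ea i) /\ (forall i, In i Lb -> Pb i w = eb i))).
  { apply Pred_ext; intro w; split.
    - intros [[[H1 H2] H3] H4]. rewrite <- Hw0 in H3. apply code_iff in H3. destruct H3 as [H3 H5].
      split; auto. split; auto. intros i Hi. unfold ea. destruct (Nat.eqb_spec i k).
      subst i. rewrite <- He in H4. apply fa_inj in H4; auto. auto.
    - intros [H1 [H2 H3]]. assert (Hke : Pa k w = e) by (rewrite H2; auto; unfold ea; rewrite Nat.eqb_refl; auto).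
      rewrite Hke. split; auto. split; auto. rewrite <- Hw0. apply code_iff. split.
      intros j Hj' Hjk. rewrite H2 by auto. unfold ea. destruct (Nat.eqb_spec j k); tauto.
      intros j Hj'. rewrite H3; auto. }
  assert (E2 : (fun w => T (Sa w) /\ fa (Sa w) = n) = (fun w => Sa w = e)).
  { apply Pred_ext; intro w; split. intros [_ H]. rewrite <- He in H; apply fa_inj; auto.
    intros ->; auto. }
  rewrite E1, E2, Hj by auto.
  rewrite (prodR_ext La _ (fun i => if Nat.eqb i k then Pr p (fun w => Sa w = e) else Pr p (fun w => Ga w = Pa i w0))).
  2:{ intros i _. unfold ea. destruct (Nat.eqb i k); auto. }
  rewrite prodR_pick by auto. unfold eb, C. ring. Qed.

Lemma a_k (T : Ea -> Prop) k (Hk : In k La) :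
  Pr p (fun w => Rv w = k /\ T (Pa k w)) = Pr p (fun w => T (Sa w)) * Pr p (fun w => Rv w = k).
Proof.
  apply (uniqueness_sum (fun m => Pr p (fun w => (Rv w = k /\ T (Pa k w)) /\ code k w = m))).
  apply Pr_disint.
  apply (isum_ext (fun m => Pr p (fun w => T (Sa w)) * Pr p (fun w => (Rv w = k /\ True) /\ code k w = m))).
  2:{ apply isum_scal. replace (fun w => Rv w = k) with (fun w => Rv w = k /\ True) by (apply Pred_ext; tauto).
      apply Pr_disint. }
  intro m. destruct (a_m k Hk m) as [C HC]. rewrite HC.
  pose proof (HC (fun _ => True)) as H1. simpl in H1. rewrite H1, Pr_True. ring. Qed.

Lemma a_gen (T : Ea -> Prop) (al : R) : al <= Pr p (fun w => T (Sa w)) ->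
  al * Pr p (fun w => In (Rv w) La) <= Pr p (fun w => In (Rv w) La /\ T (Pa (Rv w) w)).
Proof. intro Hal.
  replace (fun w => In (Rv w) La) with (fun w => In (Rv w) La /\ True) by (apply Pred_ext; tauto).
  rewrite !Pr_fin by auto. rewrite Rmult_comm, <- sumR_scal. apply sumR_le. intros k Hk.
  replace (fun w => Rv w = k /\ T (Pa (Rv w) w)) with (fun w => Rv w = k /\ T (Pa k w)).
  2:{ apply Pred_ext; intro w; split; intros [H1 H2]; subst; auto. }
  rewrite a_k by auto. replace (fun w => Rv w = k /\ True) with (fun w => Rv w = k) by (apply Pred_ext; tauto).
  pose proof (Pr_ge0 (fun w => Rv w = k)). nra. Qed.

Lemma b_gen (HSGa : forall e, 0 < Pr p (fun w => Sa w = e) -> 0 < Pr p (fun w => Ga w = e))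
  (Hdisj : forall i, In i La -> ~ In i Lb) (H0 : ~ In 0%nat La)
  (al : R) (Hal : 0 <= al <= 1) (prio : nat -> nat) (A : nat -> nat -> Prop)
  (HA : forall w i, A w i <-> In i (top_segment (fun i => LR p Sa Ga (Pa i w) * Pr p (fun w' => Rv w' = i)) prio al La)) :
  al * Pr p (fun w => In (Rv w) La) <= Pr p (fun w => In (Rv w) La /\ A w (Rv w)).
Proof.
  apply (isum_le (fun m => al * Pr p (fun w => In (Rv w) La /\ code 0 w = m))
                 (fun m => Pr p (fun w => (In (Rv w) La /\ A w (Rv w)) /\ code 0 w = m))).
  2:{ apply isum_scal, Pr_disint. }
  2:{ apply Pr_disint. }
  intro m.
  destruct (classic (exists w0, code 0 w0 = m)) as [[w0 Hw0]|Hno].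
  2:{ rewrite !Pr_empty. lra. intros n [_ Hn]; eauto. intros n [_ Hn]; eauto. }
  set (W := fun i => LR p Sa Ga (Pa i w0) * Pr p (fun w' => Rv w' = i)).
  set (g := prodR La (fun i => Pr p (fun w => Ga w = Pa i w0)) * prodR Lb (fun i => Pr p (fun w => Gb w = Pb i w0))).
  assert (Hcode : forall w, code 0 w = m <-> (forall i, In i La -> Pa i w = Pa i w0) /\ (forall i, In i Lb -> Pb i w = Pb i w0)).
  { intro w. rewrite <- Hw0, code_iff. split.
    - intros [X1 X2]. split; [intros j Hj'; apply X1; auto; intro; subst; tauto | exact X2].
    - intros [X1 X2]. split; [intros j Hj' _; apply X1; auto| exact X2]. }
  assert (C1 : forall i, In i La -> Pr p (fun w => Rv w = i /\ code 0 w = m) = W i * g).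
  { intros i Hi. replace (fun w => Rv w = i /\ code 0 w = m) with
      (fun w => Rv w = i /\ (forall j, In j La -> Pa j w = Pa j w0) /\ (forall j, In j Lb -> Pb j w = Pb j w0)).
    2:{ apply Pred_ext; intro w; rewrite Hcode; tauto. }
    rewrite Hj by auto.
    rewrite (prodR_ext Lb _ (fun j => Pr p (fun w => Gb w = Pb j w0))).
    2:{ intros j Hj'. destruct (Nat.eqb_spec j i); auto. subst; exfalso; apply (Hdisj i); auto. }
    rewrite (prodR_ext La _ (fun j => (if Nat.eqb j i then LR p Sa Ga (Pa i w0) else 1) * Pr p (fun w => Ga w = Pa j w0))).
    2:{ intros j Hj'. destruct (Nat.eqb_spec j i). subst j. rewrite (S_LR Sa Ga) by auto. ring. ring. }
    rewrite prodR_mul, prodR_ind by auto. unfold W, g. ring. }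
  set (seg := top_segment W prio al La).
  assert (Hseg : forall w, code 0 w = m -> forall i, A w i <-> In i seg).
  { intros w Hw i. rewrite HA. unfold seg. rewrite (top_segment_ext _ W). tauto.
    intros k Hk. unfold W. apply Hcode in Hw. destruct Hw as [Hw _]. rewrite Hw; auto. }
  replace (fun w => In (Rv w) La /\ code 0 w = m) with (fun w => In (Rv w) La /\ code 0 w = m) by auto.
  rewrite Pr_fin by auto.
  replace (fun w => (In (Rv w) La /\ A w (Rv w)) /\ code 0 w = m) with (fun w => In (Rv w) La /\ (A w (Rv w) /\ code 0 w = m)) by (apply Pred_ext; tauto).
  rewrite Pr_fin by auto.
  rewrite (sumR_ext La _ (fun i => W i * g)) by auto.
  rewrite (sumR_ext La (fun k => Pr p (fun w => Rv w = k /\ A w (Rv w) /\ code 0 w = m))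
              (fun i => (if in_dec Nat.eq_dec i seg then W i else 0) * g)).
  2:{ intros i Hi. destruct in_dec as [Hin|Hin].
      - rewrite <- C1 by auto. f_equal. apply Pred_ext; intro w; split.
        intros [X1 [X2 X3]]; auto. intros [X1 X3]; split; auto; split; auto. subst i. apply (Hseg w X3); auto.
      - rewrite Rmult_0_l. apply Pr_empty. intros w [X1 [X2 X3]]. subst i. apply Hin. apply (Hseg w X3); auto. }
  rewrite !sumR_scal.
  assert (Hg : 0 <= g) by (unfold g; apply Rmult_le_pos; apply prodR_ge0; intros; apply Pr_ge0).
  pose proof (top_bound W prio al La) as TB.
  assert (HW : forall k, In k La -> 0 <= W k) by (intros; unfold W; apply Rmult_le_pos; [apply LR_ge0| apply Pr_ge0]).
  specialize (TB HW Hal HLa). fold seg in TB. nra.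
Qed.

End Gen.
End P.

Theorem mainTheorem7
  (E1 E2 : Type)
  (E1_countable : exists f : E1 -> nat, forall x y, f x = f y -> x = y)
  (E2_countable : exists f : E2 -> nat, forall x y, f x = f y -> x = y)
  (p : nat -> R) (Hp : is_pmf p)
  (S1 G1 : nat -> E1) (S2 G2 : nat -> E2)
  (HSG1 : forall e, 0 < Pr p (fun w => S1 w = e) -> 0 < Pr p (fun w => G1 w = e))
  (HSG2 : forall e, 0 < Pr p (fun w => S2 w = e) -> 0 < Pr p (fun w => G2 w = e))
  (N : nat) (HN : (1 <= N)%nat)
  (D1 D2 : nat -> bool)
  (HD1 : forall i, D1 i = true -> (1 <= i <= N)%nat)
  (HD2 : forall i, D2 i = true -> (1 <= i <= N)%nat)
  (HD : forall i, (1 <= i <= N)%nat -> xorb (D1 i) (D2 i) = true)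
  (Rv : nat -> nat) (HR : forall w, (Rv w <= N)%nat)
  (P1 : nat -> nat -> E1) (P2 : nat -> nat -> E2)
  (* conditionally on R = k the P_i are independent, P_i ~ S_j if i = k, G_j otherwise *)
  (Hjoint : forall (k : nat), (k <= N)%nat -> forall (e1 : nat -> E1) (e2 : nat -> E2),
     Pr p (fun w => Rv w = k
            /\ (forall i, In i (idxD N D1) -> P1 i w = e1 i)
            /\ (forall i, In i (idxD N D2) -> P2 i w = e2 i))
     = Pr p (fun w => Rv w = k)
       * prodR (idxD N D1) (fun i => if Nat.eqb i k then Pr p (fun w => S1 w = e1 i)
                                     else Pr p (fun w => G1 w = e1 i))
       * prodR (idxD N D2) (fun i => if Nat.eqb i k then Pr p (fun w => S2 w = e2 i)
                                     else Pr p (fun w => G2 w = e2 i)))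
  (HRD : 0 < Pr p (fun w => (1 <= Rv w <= N)%nat))
  (alpha1 alpha2 : R)
  (Ha1 : 0 < alpha1 <= 1) (Ha2 : 0 < alpha2 <= 1)
  (* part (a) thresholds *)
  (t1 t2 : R)
  (Ht1 : is_largest_threshold p S1 G1 alpha1 t1)
  (Ht2 : is_largest_threshold p S2 G2 alpha2 t2)
  (* part (b): tie-breaking rules and the sets D_j^{alpha_j} (random: depend on w) *)
  (prio1 prio2 : nat -> nat)
  (Hprio1 : forall i j, (1 <= i <= N)%nat -> (1 <= j <= N)%nat -> prio1 i = prio1 j -> i = j)
  (Hprio2 : forall i j, (1 <= i <= N)%nat -> (1 <= j <= N)%nat -> prio2 i = prio2 j -> i = j)
  (A1 A2 : nat -> nat -> Prop)
  (HA1 : 0 < Pr p (fun w => D1 (Rv w) = true) -> forall w i,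
      A1 w i <-> In i (top_segment
                         (fun i => LR p S1 G1 (P1 i w) * Pr p (fun w' => Rv w' = i))
                         prio1 alpha1 (idxD N D1)))
  (HA2 : 0 < Pr p (fun w => D2 (Rv w) = true) -> forall w i,
      A2 w i <-> In i (top_segment
                         (fun i => LR p S2 G2 (P2 i w) * Pr p (fun w' => Rv w' = i))
                         prio2 alpha2 (idxD N D2))) :
  let inD := fun w => (1 <= Rv w <= N)%nat in
  let bound := alpha1 * CPr p (fun w => D1 (Rv w) = true) inD
             + alpha2 * CPr p (fun w => D2 (Rv w) = true) inD in
  (* (a) *)
  CPr p (fun w => (D1 (Rv w) = true /\ t1 <= LR p S1 G1 (P1 (Rv w) w))
               \/ (D2 (Rv w) = true /\ t2 <= LR p S2 G2 (P2 (Rv w) w))) inD >= bound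
  /\
  (* (b) *)
  CPr p (fun w => A1 w (Rv w) \/ A2 w (Rv w)) inD >= bound.
Proof.
  intros inD bound.
  destruct E1_countable as [f1 Hf1]. destruct E2_countable as [f2 Hf2].
  assert (HIn1 : forall i, In i (idxD N D1) <-> D1 i = true).
  { intro i. unfold idxD, idx. rewrite filter_In, in_seq. split; [tauto|]. intro H; split; auto. pose proof (HD1 i H); lia. }
  assert (HIn2 : forall i, In i (idxD N D2) <-> D2 i = true).
  { intro i. unfold idxD, idx. rewrite filter_In, in_seq. split; [tauto|]. intro H; split; auto. pose proof (HD2 i H); lia. }
  assert (Hdisj : forall i, In i (idxD N D1) -> In i (idxD N D2) -> False).
  { intros i H1 H2. apply HIn1 in H1. apply HIn2 in H2. pose proof (HD i (HD1 i H1)). rewrite H1, H2 in H; discriminate. }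
  assert (ND1 : NoDup (idxD N D1)) by (apply NoDup_filter, seq_NoDup).
  assert (ND2 : NoDup (idxD N D2)) by (apply NoDup_filter, seq_NoDup).
  assert (H01 : ~ In 0%nat (idxD N D1)) by (intro H; apply HIn1, HD1 in H; lia).
  assert (H02 : ~ In 0%nat (idxD N D2)) by (intro H; apply HIn2, HD2 in H; lia).
  assert (Hj1 : forall k, In k (idxD N D1) -> forall (ea : nat -> E1) (eb : nat -> E2),
    Pr p (fun w => Rv w = k /\ (forall i, In i (idxD N D1) -> P1 i w = ea i) /\ (forall i, In i (idxD N D2) -> P2 i w = eb i))
    = Pr p (fun w => Rv w = k)
      * prodR (idxD N D1) (fun i => if Nat.eqb i k then Pr p (fun w => S1 w = ea i) else Pr p (fun w => G1 w = ea i))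
      * prodR (idxD N D2) (fun i => if Nat.eqb i k then Pr p (fun w => S2 w = eb i) else Pr p (fun w => G2 w = eb i))).
  { intros k Hk ea eb. apply Hjoint. apply HIn1, HD1 in Hk; lia. }
  assert (Hj2 : forall k, In k (idxD N D2) -> forall (ea : nat -> E2) (eb : nat -> E1),
    Pr p (fun w => Rv w = k /\ (forall i, In i (idxD N D2) -> P2 i w = ea i) /\ (forall i, In i (idxD N D1) -> P1 i w = eb i))
    = Pr p (fun w => Rv w = k)
      * prodR (idxD N D2) (fun i => if Nat.eqb i k then Pr p (fun w => S2 w = ea i) else Pr p (fun w => G2 w = ea i))
      * prodR (idxD N D1) (fun i => if Nat.eqb i k then Pr p (fun w => S1 w = eb i) else Pr p (fun w => G1 w = eb i))).
  { intros k Hk ea eb.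
    replace (fun w => Rv w = k /\ (forall i, In i (idxD N D2) -> P2 i w = ea i) /\ (forall i, In i (idxD N D1) -> P1 i w = eb i))
      with (fun w => Rv w = k /\ (forall i, In i (idxD N D1) -> P1 i w = eb i) /\ (forall i, In i (idxD N D2) -> P2 i w = ea i))
      by (apply Pred_ext; tauto).
    rewrite Hjoint. ring. apply HIn2, HD2 in Hk; lia. }
  assert (EPD1 : Pr p (fun w => D1 (Rv w) = true /\ inD w) = Pr p (fun w => In (Rv w) (idxD N D1))).
  { f_equal. apply Pred_ext; intro w; rewrite HIn1; unfold inD; split; [tauto|]. intro H; split; auto. }
  assert (EPD2 : Pr p (fun w => D2 (Rv w) = true /\ inD w) = Pr p (fun w => In (Rv w) (idxD N D2))).
  { f_equal. apply Pred_ext; intro w; rewrite HIn2; unfold inD; split; [tauto|]. intro H; split; auto. }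
  assert (Fin : forall (X : nat -> Prop) (B1 B2 : nat -> Prop),
    (forall w, In (Rv w) (idxD N D1) /\ B1 w -> X w /\ inD w) ->
    (forall w, In (Rv w) (idxD N D2) /\ B2 w -> X w /\ inD w) ->
    alpha1 * Pr p (fun w => In (Rv w) (idxD N D1)) <= Pr p (fun w => In (Rv w) (idxD N D1) /\ B1 w) ->
    alpha2 * Pr p (fun w => In (Rv w) (idxD N D2)) <= Pr p (fun w => In (Rv w) (idxD N D2) /\ B2 w) ->
    CPr p X inD >= bound).
  { intros X B1 B2 HX1 HX2 HB1 HB2. unfold bound, CPr. rewrite EPD1, EPD2.
    assert (Hs : Pr p (fun w => In (Rv w) (idxD N D1) /\ B1 w) + Pr p (fun w => In (Rv w) (idxD N D2) /\ B2 w)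
                 <= Pr p (fun w => X w /\ inD w)).
    { rewrite <- Pr_add by (auto; intros w [Ha _] [Hb _]; eauto).
      apply Pr_mono; auto. intros w [H|H]; auto. }
    apply Rle_ge. unfold Rdiv. fold inD in HRD.
    assert (Hi : 0 < / Pr p inD) by (apply Rinv_0_lt_compat; auto).
    apply Rle_trans with ((alpha1 * Pr p (fun w => In (Rv w) (idxD N D1)) + alpha2 * Pr p (fun w => In (Rv w) (idxD N D2))) * / Pr p inD).
    right; ring. apply Rmult_le_compat_r; lra. }
  split.
  - apply (Fin _ (fun w => t1 <= LR p S1 G1 (P1 (Rv w) w)) (fun w => t2 <= LR p S2 G2 (P2 (Rv w) w))).
    + intros w [H1 H2]. apply HIn1 in H1. split; [left; auto| unfold inD; apply HD1; auto].
    + intros w [H1 H2]. apply HIn2 in H1. split; [right; auto| unfold inD; apply HD2; auto].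
    + apply (a_gen p Hp E1 E2 f1 f2 Hf1 Hf2 S1 G1 S2 G2 _ _ Rv P1 P2 ND1 Hj1 (fun e => t1 <= LR p S1 G1 e)).
      apply Ht1.
    + apply (a_gen p Hp E2 E1 f2 f1 Hf2 Hf1 S2 G2 S1 G1 _ _ Rv P2 P1 ND2 Hj2 (fun e => t2 <= LR p S2 G2 e)).
      apply Ht2.
  - apply (Fin _ (fun w => A1 w (Rv w)) (fun w => A2 w (Rv w))).
    + intros w [H1 H2]. apply HIn1 in H1. split; [left; auto| unfold inD; apply HD1; auto].
    + intros w [H1 H2]. apply HIn2 in H1. split; [right; auto| unfold inD; apply HD2; auto].
    + destruct (Rlt_dec 0 (Pr p (fun w => D1 (Rv w) = true))) as [Hpos|Hpos].
      * apply (b_gen p Hp E1 E2 f1 f2 Hf1 Hf2 S1 G1 S2 G2 _ _ Rv P1 P2 ND1 Hj1 HSG1 (fun i Hi Hi' => Hdisj i Hi Hi') H01 alpha1 ltac:(lra) prio1 A1 (HA1 Hpos)).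
      * replace (fun w => In (Rv w) (idxD N D1)) with (fun w => D1 (Rv w) = true) by (apply Pred_ext; intro; rewrite HIn1; tauto).
        pose proof (Pr_ge0 p Hp (fun w => D1 (Rv w) = true)).
        pose proof (Pr_ge0 p Hp (fun w => In (Rv w) (idxD N D1) /\ A1 w (Rv w))).
        replace (Pr p (fun w => D1 (Rv w) = true)) with 0 by lra. lra.
    + destruct (Rlt_dec 0 (Pr p (fun w => D2 (Rv w) = true))) as [Hpos|Hpos].
      * apply (b_gen p Hp E2 E1 f2 f1 Hf2 Hf1 S2 G2 S1 G1 _ _ Rv P2 P1 ND2 Hj2 HSG2 (fun i Hi Hi' => Hdisj i Hi' Hi) H02 alpha2 ltac:(lra) prio2 A2 (HA2 Hpos)).
      * replace (fun w => In (Rv w) (idxD N D2)) with (fun w => D2 (Rv w) = true) by (apply Pred_ext; intro; rewrite HIn2; tauto).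
        pose proof (Pr_ge0 p Hp (fun w => D2 (Rv w) = true)).
        pose proof (Pr_ge0 p Hp (fun w => In (Rv w) (idxD N D2) /\ A2 w (Rv w))).
        replace (Pr p (fun w => D2 (Rv w) = true)) with 0 by lra. lra.
Qed.
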